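(* Let $s$ and $t$ be fixed positive integers. Then for sufficiently large $n$, $$R(\mathcal{SD}_{s,t},Q_n)\le n+\frac{(2+o(1))\,n}{\log n},$$ where $o(1)$ denotes a quantity tending to $0$ as $n\to\infty$ (for fixed $s,t$).
   Context: A poset $P_2$ is an (induced) subposet of $P_1$ if $P_2\subseteq P_1$ and for all $X,Y\in P_2$, $X\le_{P_2}Y$ iff $X\le_{P_1}Y$; a copy of a poset $P$ in $P_1$ is an induced subposet isomorphic to $P$. The Boolean lattice $Q_n$ is the poset of all subsets of an $n$-element set ordered by inclusion. A blue/red coloring of a poset is a map from its elements to $\{\text{blue},\text{red}\}$. For posets $P_1,P_2$, the poset Ramsey number $R(P_1,P_2)$ is the smallest integer $N$ such that every blue/red coloring of $Q_N$ contains a copy of $P_1$ all of whose elements are blue or a copy of $P_2$ all of whose elements are red. A chain $C_t$ is a totally ordered poset on $t$ elements. The $(s,t)$-subdivided diamond $\mathcal{SD}_{s,t}$ is the poset obtained from two disjoint chains of lengths $s$ and $t$, whose elements are pairwise incomparable across the two chains, by adding one element smaller than all others and one element larger than all others. $\log$ is base $2$. *)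

(* Defs.v *)
From mathcomp Require Import all_boot.
From Stdlib Require Export Reals.

Set Implicit Arguments.
Unset Strict Implicit.
Unset Printing Implicit Defensive.

Definition Q (N : nat) : finType := {set 'I_N}.
Definition Q_le (N : nat) : rel (Q N) := fun X Y => X \subset Y.

(* A copy of a finite poset (T, le) in Q_N: an induced subposet of Q_N
   isomorphic to (T, le), i.e. an injective order embedding
   (x <= y in T iff f x is a subset of f y). *)
Definition is_copy (T : finType) (le : rel T) (N : nat) (f : T -> {set 'I_N}) : Prop :=
  injective f /\ (forall x y : T, le x y = (f x \subset f y)).

Definition has_mono_copy (T : finType) (le : rel T) (N : nat)
    (col : {set 'I_N} -> bool) : Prop :=
  exists f : T -> {set 'I_N}, is_copy le f /\ (forall x : T, col (f x)).

(* Ramsey property at N: every blue/red colouring (true = blue, false = red)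
   of Q_N has a blue copy of P1 or a red copy of P2.
   The poset Ramsey number R(P1,P2) is the least N with this property. *)
Definition ramsey_prop (T1 : finType) (le1 : rel T1) (T2 : finType) (le2 : rel T2)
    (N : nat) : Prop :=
  forall c : {set 'I_N} -> bool,
    has_mono_copy le1 c \/ has_mono_copy le2 (fun X => ~~ c X).

(* The (s,t)-subdivided diamond: inl false = bottom, inl true = top,
   inr (inl i) = i-th element of the chain of s elements,
   inr (inr j) = j-th element of the chain of t elements. *)
Definition SD (s t : nat) : finType := (bool + ('I_s + 'I_t))%type.
Definition SD_le (s t : nat) : rel (SD s t) := fun x y =>
  match x, y with
  | inl false, _ => true
  | _, inl true => true
  | inl true, _ => false
  | _, inl false => false
  | inr (inl i), inr (inl j) => (nat_of_ord i <= nat_of_ord j)%N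
  | inr (inr i), inr (inr j) => (nat_of_ord i <= nat_of_ord j)%N
  | _, _ => false
  end.

Definition log2 (x : R) : R := (ln x / ln 2)%R.

(* Main.v *)
Require Import Defs.
From Stdlib Require Import Reals ClassicalEpsilon Classical Lra Lia.
From mathcomp Require Import all_boot fingroup perm.

Section Chain.
Variables (n k : nat).
Definition xs (B : {set 'I_n}) : {set 'I_(n+k)} := [set lshift k i | i in B].
Definition Yimg : {set 'I_(n+k)} := [set rshift n j | j in 'I_k].

Lemma sub_split (B B' : {set 'I_n}) (W W' : {set 'I_(n+k)}) : W \subset Yimg -> W' \subset Yimg ->
  (xs B :|: W) \subset (xs B' :|: W') -> (B \subset B') /\ (W \subset W').
Proof.
move=> hW hW' /subsetP hs; split; apply/subsetP => x hx.
- have := hs (lshift k x); rewrite inE mem_imset ?hx //; last exact: lshift_inj.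
  move/(_ isT); rewrite inE => /orP [|hy].
    by rewrite mem_imset //; exact: lshift_inj.
  move/subsetP: hW' => /(_ _ hy) /imsetP [j _ /eqP]. by rewrite eq_lrshift.
- have := hs x; rewrite inE hx orbT => /(_ isT); rewrite inE => /orP [|//].
  move/imsetP=> [i _ ei]. move/subsetP: hW => /(_ _ hx) /imsetP [j _ ej].
  by move: ej; rewrite ei => /eqP; rewrite eq_lrshift.
Qed.

Lemma xsS (B B' : {set 'I_n}) : B \subset B' -> xs B \subset xs B'.
Proof. exact: imsetS. Qed.

Definition pb (P : Prop) : bool := if excluded_middle_informative P then true else false.
Lemma pbP P : reflect P (pb P).
Proof. rewrite /pb; case: excluded_middle_informative => h; constructor => //. Qed.

Variables (c : {set 'I_(n+k)} -> bool) (W : nat -> {set 'I_(n+k)}) (kk : nat).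
Hypothesis hWY : forall i, W i \subset Yimg.
Hypothesis hWm : forall i j, i <= j -> W i \subset W j.

Definition blocked (A : {set 'I_n}) i := exists B : nat -> {set 'I_n},
  (forall j j', j <= j' -> j' <= i -> B j \subset B j') /\
  (forall j, j <= i -> B j \subset A /\ c (xs (B j) :|: W j)).

Lemma chain_lemma :
  has_mono_copy (@Q_le n) (fun X => ~~ c X) \/
  exists B : nat -> {set 'I_n},
  (forall j j', j <= j' -> j' <= kk -> B j \subset B j') /\
  (forall j, j <= kk -> c (xs (B j) :|: W j)).
Proof.
case: (classic (exists A, blocked A kk)) => [[A [B [h1 h2]]]|hno].
  right; exists B; split => // j hj; exact: (h2 j hj).2.
left.
have hex : forall A : {set 'I_n}, exists i, ~~ pb (blocked A i).
  move=> A; exists kk; apply/pbP => hb; apply: hno; by exists A.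
pose h A := ex_minn (hex A).
have hh1 : forall A, ~ blocked A (h A).
  move=> A; rewrite /h; case: ex_minnP => i /pbP hi _; exact: hi.
have hh2 : forall A i, ~ blocked A i -> h A <= i.
  move=> A i hi; rewrite /h; case: ex_minnP => j _; apply; by apply/pbP.
have hdown : forall A i j, blocked A i -> j <= i -> blocked A j.
  move=> A i j [B [b1 b2]] ji; exists B; split.
    move=> a b ab bj; apply: b1 => //; exact: leq_trans bj ji.
  move=> a aj; apply: b2; exact: leq_trans aj ji.
have hAm : forall (A A' : {set 'I_n}) i, A \subset A' -> blocked A i -> blocked A' i.
  move=> A A' i AA [B [b1 b2]]; exists B; split => // j hj.
  have [? ?] := b2 j hj; split => //; exact: subset_trans AA.
have hmono : forall A A' : {set 'I_n}, A \subset A' -> h A <= h A'.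
  move=> A A' AA; apply: hh2 => hb; apply: (hh1 A'); exact: hAm hb.
have hred : forall A, c (xs A :|: W (h A)) = false.
  move=> A; apply/negP => hc; apply: (hh1 A).
  case E: (h A) => [|i].
    exists (fun _ => A); split => // j; rewrite leqn0 => /eqP ->; by rewrite -E.
  have : blocked A i.
    apply: NNPP => hb; have := hh2 _ _ hb; by rewrite E ltnn.
  move=> [B [b1 b2]].
  exists (fun j => if j <= i then B j else A); split.
    move=> j j' jj' j'i.
    case: ifP => ji; case: ifP => j'i'.
    - exact: b1.
    - exact: (b2 j ji).1.
    - by move: ji; rewrite (leq_trans jj' j'i').
    - exact: subxx.
  move=> j ji; case: ifP => ji'.
    exact: b2.
  have -> : j = i.+1 by apply/eqP; rewrite eqn_leq ji ltnNge ji'.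
  by rewrite -E.
exists (fun A => xs A :|: W (h A)); split; last by move=> A; rewrite hred.
have hiff : forall A A' : Q n, Q_le A A' = (xs A :|: W (h A) \subset xs A' :|: W (h A')).
  move=> A A'; rewrite /Q_le; apply/idP/idP.
    move=> AA; apply: setUSS; [exact: xsS | apply: hWm; exact: hmono].
  by move/sub_split => /(_ (hWY _) (hWY _)) [].
split => // A A' e; apply/eqP; rewrite eqEsubset -!/(Q_le _ _) !hiff e subxx //.
Qed.
End Chain.

Section Comb.
Variables (n m d : nat).
Hypothesis dpos : 0 < d.
Definition Yt := ('I_m * 'I_d)%type.

Lemma phi_lt (y : Yt) : y.1 * d + y.2 < m * d.
Proof.
case: y => [[a ha] [r hr]] /=.
apply: (@leq_trans (a * d + d)); first by rewrite ltn_add2l.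
by rewrite -mulSnr leq_mul2r ha orbT.
Qed.

Definition e (y : Yt) : 'I_(n + m * d) := rshift n (Ordinal (phi_lt y)).

Lemma phi_inj (a r a' r' : nat) : r < d -> r' < d -> a * d + r = a' * d + r' -> a = a' /\ r = r'.
Proof.
move=> hr hr' E; split.
  have := congr1 (fun x => x %/ d) E => /=.
  by rewrite !divnMDl // !divn_small // !addn0.
have := congr1 (fun x => x %% d) E => /=.
by rewrite !modnMDl !modn_small.
Qed.

Lemma e_inj : injective e.
Proof.
move=> [[a ha] [r hr]] [[a' ha'] [r' hr']] /= /rshift_inj /(congr1 val) /= E.
have [E1 E2] := @phi_inj a r a' r' hr hr' E.
subst; congr pair; exact: val_inj.
Qed.

Definition pos (S : {ffun 'I_d -> {perm 'I_m}}) (y : Yt) : nat :=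
  ((S y.2)^-1)%g y.1 * d + y.2.

Definition WS S i : {set 'I_(n + m * d)} := [set e y | y in [set y : Yt | pos S y < i]].

Lemma WS_Y S i : WS S i \subset Yimg n (m * d).
Proof. apply/subsetP => x /imsetP [y _ ->]; exact: imset_f. Qed.

Lemma WS_mono S i j : i <= j -> WS S i \subset WS S j.
Proof.
move=> ij; apply: imsetS; apply/subsetP => y; rewrite !inE => h; exact: leq_trans h ij.
Qed.

Lemma memWS S i y : (e y \in WS S i) = (pos S y < i).
Proof. by rewrite mem_imset ?inE //; exact: e_inj. Qed.

Lemma pos_lt S y : pos S y < m * d.
Proof. rewrite /pos; exact: (phi_lt (((S y.2)^-1)%g y.1, y.2)). Qed.

Lemma WS_full S : WS S (m * d) = [set e y | y in [set: Yt]].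
Proof. rewrite /WS; have -> : [set y : Yt | pos S y < m * d] = setT by apply/setP => y; rewrite !inE pos_lt. by []. Qed.

Lemma WS_strict S j j' : j < j' -> j' <= m * d -> ~~ (WS S j' \subset WS S j).
Proof.
move=> jj' j'm.
have hjm : j < m * d by exact: leq_trans jj' j'm.
have h1 : j %/ d < m by rewrite ltn_divLR.
have h2 : j %% d < d by rewrite ltn_mod.
pose r := Ordinal h2. pose y : Yt := (S r (Ordinal h1), r).
have py : pos S y = j by rewrite /pos /= permK /= -divn_eq.
apply/negP => /subsetP /(_ (e y)); rewrite !memWS py ltnn; by move/(_ jj').
Qed.

Lemma perm_first (pi pi' : {perm 'I_m}) q : pi q != pi' q ->
  (forall q', pi q' != pi' q' -> q <= q') -> q < (pi'^-1)%g (pi q).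
Proof.
move=> hq hmin.
set x := (pi'^-1)%g (pi q).
have ex : pi' x = pi q by rewrite /x permKV.
have E1 : q != x by apply: contra hq => /eqP {2}->; rewrite ex.
have hx : pi x != pi' x.
  rewrite ex; apply: contra E1 => /eqP /perm_inj ->; by [].
rewrite ltn_neqAle; apply/andP; split; first exact: E1.
exact: hmin.
Qed.

Lemma WS_cross S S' : S != S' -> exists p, p + d < m * d /\
  forall a b, p < a -> a <= p + d -> p < b -> b <= p + d ->
    ~~ (WS S a \subset WS S' b) /\ ~~ (WS S' b \subset WS S a).
Proof.
move=> hne.
have [r hr] : exists r, S r != S' r.
  case: (pickP (fun r => S r != S' r)) => [r hr|h]; first by exists r.
  by case/eqP: hne; apply/ffunP => r; apply/eqP; move: (h r) => /negbFE.
have [a0 ha0] : exists a, S r a != S' r a.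
  case: (pickP (fun a => S r a != S' r a)) => [a ha|h]; first by exists a.
  by case/eqP: hr; apply/permP => a; apply/eqP; move: (h a) => /negbFE.
set pi := S r in hr ha0 *; set pi' := S' r in hr ha0 *.
case: (@arg_minnP _ a0 (fun q => pi q != pi' q) val ha0) => q hq hmin.
have h1 := @perm_first _ _ _ hq hmin.
have h2 : q < (pi^-1)%g (pi' q).
  apply: perm_first; first by rewrite eq_sym.
  by move=> q' hq'; apply: hmin; rewrite eq_sym.
pose y : Yt := (pi q, r). pose y' : Yt := (pi' q, r).
have py : pos S y = q * d + r by rewrite /pos /= permK.
have py' : pos S' y' = q * d + r by rewrite /pos /= permK.
have hge : forall x : 'I_m, q < x -> q * d + r + d <= x * d + r.
  move=> x qx; rewrite addnAC leq_add2r -mulSnr leq_mul2r qx orbT //.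
have qy : q * d + r + d <= pos S' y by exact: hge.
have qy' : q * d + r + d <= pos S y' by exact: hge.
exists (q * d + r); split.
  apply: leq_trans (pos_lt S' y); exact: leq_trans qy.
move=> a b pa ap pb bp; split; apply/negP => /subsetP.
  move/(_ (e y)); rewrite !memWS py => /(_ pa).
  move=> hb; have := leq_ltn_trans qy (leq_trans hb bp); by rewrite ltnn.
move/(_ (e y')); rewrite !memWS py' => /(_ pb).
move=> hb; have := leq_ltn_trans qy' (leq_trans hb ap); by rewrite ltnn.
Qed.
End Comb.

Lemma card_setI n : #|{: {set 'I_n}}| = 2 ^ n.
Proof. by rewrite -cardsT -powersetT card_powerset cardsT card_ord. Qed.

Lemma WS0 n m d S : WS n m d S 0 = set0.
Proof. apply/setP => x; rewrite inE; apply/negP => /imsetP [y]; by rewrite inE ltn0. Qed.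

Theorem comb (s t n m d : nat) : 0 < s -> 0 < t -> s <= d -> t <= d ->
  4 ^ n < (m`!) ^ d -> ramsey_prop (@SD_le s t) (@Q_le n) (n + m * d).
Proof.
move=> hs ht sd td hbig c.
have dpos : 0 < d := leq_trans hs sd.
case: (classic (has_mono_copy (@Q_le n) (fun X => ~~ c X))) => hr; first by right.
left.
have hB : forall S : {ffun 'I_d -> {perm 'I_m}}, exists B : nat -> {set 'I_n},
  (forall j j', j <= j' -> j' <= m * d -> B j \subset B j') /\
  (forall j, j <= m * d -> c (xs n (m * d) (B j) :|: WS n m d S j)).
  move=> S.
  case: (@chain_lemma n (m * d) c (WS n m d S) (m * d) (WS_Y n m d S) (WS_mono n m d S)) => //.
pose Bf S := proj1_sig (constructive_indefinite_description _ (hB S)).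
have hBf S := proj2_sig (constructive_indefinite_description _ (hB S)).
pose F S := (Bf S 0, Bf S (m * d)).
have : ~~ injectiveb F.
  apply/negP => /injectiveP /leq_card.
  rewrite card_ffun card_Sn card_ord card_prod !card_setI -expnMn.
  by rewrite leqNgt hbig.
case/injectivePn => S [S' hne hF].
have h0 : Bf S 0 = Bf S' 0 by have := congr1 fst hF.
have hk : Bf S (m * d) = Bf S' (m * d) by have := congr1 snd hF.
have [p [hp hcr]] := @WS_cross n m d dpos S S' hne.
pose Z T i := xs n (m * d) (Bf T i) :|: WS n m d T i.
have ZZ : forall T i j, i <= m * d -> j <= m * d -> (Z T i \subset Z T j) = (i <= j).
  move=> T i j hi hj; apply/idP/idP.
    move/sub_split => /(_ (WS_Y _ _ _ _ _) (WS_Y _ _ _ _ _)) [_ hW].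
    rewrite leqNgt; apply/negP => ji; have := @WS_strict n m d dpos T _ _ ji hi; by rewrite hW.
  move=> ij; apply: setUSS; [apply: xsS; exact: (hBf T).1 | exact: WS_mono].
have Z0 : Z S 0 = Z S' 0 by rewrite /Z h0 !WS0.
have Zk : Z S (m * d) = Z S' (m * d) by rewrite /Z hk !WS_full.
have Zc : forall a b, p < a -> a <= p + d -> p < b -> b <= p + d ->
   ~~ (Z S a \subset Z S' b) /\ ~~ (Z S' b \subset Z S a).
  move=> a b h1 h2 h3 h4; have [c1 c2] := hcr a b h1 h2 h3 h4; split.
    apply: contra c1 => H; exact: (@sub_split _ _ _ _ _ _ (WS_Y _ _ _ _ _) (WS_Y _ _ _ _ _) H).2.
  apply: contra c2 => H; exact: (@sub_split _ _ _ _ _ _ (WS_Y _ _ _ _ _) (WS_Y _ _ _ _ _) H).2.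
have lts : forall i : 'I_s, p.+1 + i <= p + d.
  move=> i; rewrite addSn -addnS leq_add2l; exact: leq_trans (ltn_ord i) sd.
have ltt : forall i : 'I_t, p.+1 + i <= p + d.
  move=> i; rewrite addSn -addnS leq_add2l; exact: leq_trans (ltn_ord i) td.
have pd : p + d <= m * d by exact: ltnW.
have mdpos : 0 < m * d by exact: leq_ltn_trans (leq0n _) hp.
pose f (x : SD s t) := match x with
  | inl false => Z S 0 | inl true => Z S (m * d)
  | inr (inl i) => Z S (p.+1 + i) | inr (inr j) => Z S' (p.+1 + j) end.
have hle : forall x y, SD_le x y = (f x \subset f y).
  have bs : forall i : 'I_s, p.+1 + i <= m * d by move=> i; exact: leq_trans (lts i) pd.
  have bt : forall i : 'I_t, p.+1 + i <= m * d by move=> i; exact: leq_trans (ltt i) pd.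
  have gs : forall i : 'I_s, p.+1 + i < m * d by move=> i; exact: leq_ltn_trans (lts i) hp.
  have gt : forall i : 'I_t, p.+1 + i < m * d by move=> i; exact: leq_ltn_trans (ltt i) hp.
  have md0 : 0 <= m * d by [].
  have mdd : m * d <= m * d by [].
  move=> [[]|[i|i]] [[]|[j|j]]; rewrite /SD_le /f.
  - by rewrite subxx.
  - by rewrite (ZZ _ _ _ mdd md0) leqNgt mdpos.
  - by rewrite (ZZ _ _ _ mdd (bs j)) leqNgt gs.
  - by rewrite Zk (ZZ _ _ _ mdd (bt j)) leqNgt gt.
  - by rewrite (ZZ _ _ _ md0 mdd).
  - by rewrite subxx.
  - by rewrite (ZZ _ _ _ md0 (bs j)).
  - by rewrite Z0 (ZZ _ _ _ md0 (bt j)).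
  - by rewrite (ZZ _ _ _ (bs i) mdd) bs.
  - by rewrite (ZZ _ _ _ (bs i) md0) addSn.
  - by rewrite (ZZ _ _ _ (bs i) (bs j)) leq_add2l.
  - have [h _] := Zc (p.+1 + i) (p.+1 + j) (leq_addr _ _) (lts i) (leq_addr _ _) (ltt j).
    by rewrite (negbTE h).
  - by rewrite Zk (ZZ _ _ _ (bt i) mdd) bt.
  - by rewrite Z0 (ZZ _ _ _ (bt i) md0) addSn.
  - have [_ h] := Zc (p.+1 + j) (p.+1 + i) (leq_addr _ _) (lts j) (leq_addr _ _) (ltt i).
    by rewrite (negbTE h).
  - by rewrite (ZZ _ _ _ (bt i) (bt j)) leq_add2l.
exists f; split; last first.
  move=> [[]|[i|i]] /=; apply: (hBf _).2 => //.
  - exact: leq_trans (lts i) pd.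
  - exact: leq_trans (ltt i) pd.
split => // x y hxy.
have : SD_le x y && SD_le y x by rewrite !hle hxy subxx.
move: x y {hxy} => [[]|[i|i]] [[]|[j|j]] //=.
- by move/andP => [a b]; congr (inr (inl _)); apply: val_inj; apply/eqP; rewrite eqn_leq a b.
- by move/andP => [a b]; congr (inr (inr _)); apply: val_inj; apply/eqP; rewrite eqn_leq a b.
Qed.

Section RealPart.
Local Open Scope R_scope.

Lemma expn_pow m n : expn m n = Nat.pow m n.
Proof. elim: n => [|n IH] //; rewrite expnS IH /=. by rewrite mulnE. Qed.

Lemma real_bound (n L m d K : nat) (eps : R) : (0 < K)%N -> (1 <= L)%N ->
  (2 ^ L <= n)%N -> (n < 2 ^ (L + 1))%N -> (K * d * (L + 1) * m <= (2 * K + 1) * n)%N ->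
  (Rinv (INR K) < eps) ->
  (INR (n + m * d) <= INR n + (2 + eps) * INR n / log2 (INR n)).
Proof.
move=> Kp L1 hL hL' hm heps.
have nat2R : forall a b : nat, (a <= b)%N -> (INR a <= INR b).
  by move=> a b /leP; apply: le_INR.
have Hm := nat2R _ _ hm.
rewrite !mult_INR !plus_INR in Hm.
rewrite plus_INR mult_INR.
have kp : (0 < INR K) by apply: lt_0_INR; apply/ltP.
have n2 : (2 <= INR n).
  have : (2 <= n)%N by apply: leq_trans hL; rewrite -{1}(expn1 2) leq_exp2l.
  by move/nat2R.
have hn' : (INR n < 2 ^ (L + 1)).
  rewrite (_ : 2 = INR 2); last by rewrite /=; lra.
  rewrite -pow_INR; apply: lt_INR; apply/ltP; move: hL'; by rewrite expn_pow.
have ln2 : (0 < ln 2) by have := ln_lt_2; lra.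
have lnn : (0 < ln (INR n)) by rewrite -ln_1; apply: ln_increasing; lra.
have lnl : (ln (INR n) < INR (L + 1) * ln 2).
  rewrite -ln_pow; last lra.
  apply: ln_increasing; lra.
rewrite plus_INR /= in lnl.
set lg := log2 (INR n).
have lg0 : (0 < lg) by rewrite /lg /log2; apply: Rdiv_lt_0_compat.
have lgl : (lg < INR L + 1).
  rewrite /lg /log2; apply (Rmult_lt_reg_r (ln 2)) => //.
  field_simplify; lra.
set x := (INR m * INR d).
have x0 : (0 <= x) by rewrite /x; apply: Rmult_le_pos; apply: pos_INR.
have l0 : (0 <= INR L) by apply: pos_INR.
have e1 : (x * (INR L + 1) <= (2 + eps) * INR n).
  have e2 : (x * (INR L + 1) * INR K <= (2 * INR K + 1) * INR n).
    rewrite /= in Hm; rewrite /x; nra.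
  have e3 : (x * (INR L + 1) <= (2 + Rinv (INR K)) * INR n).
    apply (Rmult_le_reg_r (INR K)) => //.
    have -> : ((2 + Rinv (INR K)) * INR n * INR K = (2 * INR K + 1) * INR n) by field; lra.
    exact: e2.
  nra.
have e4 : (x <= (2 + eps) * INR n / lg).
  apply (Rmult_le_reg_r lg) => //.
  have -> : ((2 + eps) * INR n / lg * lg = (2 + eps) * INR n) by field; lra.
  nra.
lra.
Qed.

End RealPart.

From mathcomp Require Import zify ring.

Lemma fact_ge q m : q ^ (m - q) <= m`!.
Proof.
elim: m => [|m IH]; first by rewrite sub0n expn0.
case: (leqP q m) => hq.
  rewrite subSn // expnS factS; apply: leq_mul => //.
  exact: leq_trans hq (leqnSn _).
have -> : m.+1 - q = 0 by apply/eqP; rewrite subn_eq0.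
by rewrite expn0 fact_gt0.
Qed.

Lemma cube_exp j : (j + 13) ^ 3 <= 2 ^ (j + 12).
Proof.
elim: j => [|j IH]; first by [].
rewrite !addSn [2 ^ _]expnS.
have h : (j + 13).+1 ^ 3 <= 2 * (j + 13) ^ 3.
  rewrite !expnS expn0; nia.
exact: leq_trans h (leq_mul (leqnn 2) IH).
Qed.

Lemma exp_poly (c : nat) : exists h0, 0 < h0 /\ forall h, h0 <= h -> c * (h + 1) ^ 2 <= 2 ^ h.
Proof.
exists (maxn 12 c).+1; split => // h hh.
have h12 : 12 <= h by lia.
have hc : c <= h + 1 by lia.
have := cube_exp (h - 12); rewrite subnK //.
have -> : h - 12 + 13 = h + 1 by lia.
move=> H; apply: (leq_trans _ H); rewrite [(h+1)^3]expnS; exact: leq_mul.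
Qed.

Lemma nat_bound K d h0 n : 0 < K -> 0 < d -> 0 < h0 ->
  (forall h, h0 <= h -> K * (4 * K + 2) * (1 + 2 * (4 * K + 2) * d) * (h + 1) ^ 2 <= 2 ^ h) ->
  2 ^ ((4 * K + 2) * (h0 + 1)) <= n ->
  4 ^ n < (((2 * K + 1) * n) %/ (K * d * (trunc_log 2 n + 1)))`! ^ d.
Proof.
move=> Kp dp h0p hpoly hn.
set M := 4 * K + 2.
set L := trunc_log 2 n.
have n0 : 0 < n by apply: leq_trans hn; rewrite expn_gt0.
have hL : 2 ^ L <= n by exact: trunc_logP.
have hL' : n < 2 ^ (L + 1) by rewrite addn1; exact: trunc_log_ltn.
have hLM : M * (h0 + 1) <= L by exact: trunc_log_max.
have Mp : 0 < M by rewrite /M addn2.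
set h := L %/ M.
have hh : h0 + 1 <= h by rewrite leq_divRL // mulnC.
have hLh : h * M <= L by exact: leq_trunc_div.
have hL1 : L < (h + 1) * M by rewrite addn1; exact: ltn_ceil.
have hhL : h <= L by apply: leq_trans hLh; rewrite leq_pmulr.
set g := L - h.
have hLgh : L = g + h by rewrite /g subnK.
set q := 2 ^ g.
have q1 : 1 <= q by rewrite expn_gt0.
clearbody h.
have hC := hpoly h (leq_trans (leq_addr _ _) hh).
have key1 : K * (L + 1) * (1 + 2 * L * d) <= 2 ^ h.
  apply: (leq_trans _ hC).
  have a1 : L + 1 <= M * (h + 1) by rewrite mulnC addn1.
  have a2 : L <= M * (h + 1) by rewrite mulnC; exact: ltnW.
  have b1 : 1 + 2 * L * d <= (1 + 2 * M * d) * (h + 1).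
    apply: (@leq_trans (1 + 2 * (M * (h + 1)) * d)).
      by rewrite leq_add2l leq_mul2r leq_mul2l a2 !orbT.
    have -> : (1 + 2 * M * d) * (h + 1) = (h + 1) + 2 * (M * (h + 1)) * d by ring.
    by rewrite leq_add2r addn1.
  have -> : K * M * (1 + 2 * M * d) * (h + 1) ^ 2 = K * (M * (h + 1)) * ((1 + 2 * M * d) * (h + 1)) by ring.
  exact: leq_mul (leq_mul (leqnn K) a1) b1.
have hq : 2 ^ L = q * 2 ^ h by rewrite hLgh expnD.
set P := K * d * (L + 1).
have key2 : K * (L + 1) + g * P * (1 + q) <= n.
  apply: leq_trans hL; rewrite hq.
  have gL : g <= L by rewrite /g leq_subr.
  apply: (@leq_trans (q * (K * (L + 1) * (1 + 2 * L * d)))); last by rewrite leq_mul2l key1 orbT.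
  have e1 : K * (L + 1) <= q * (K * (L + 1)) by exact: leq_pmull.
  have q2 : 1 + q <= 2 * q by rewrite mul2n -addnn leq_add2r.
  have e2 : g * P * (1 + q) <= L * P * (2 * q) by exact: leq_mul (leq_mul gL (leqnn _)) q2.
  have -> : q * (K * (L + 1) * (1 + 2 * L * d)) = q * (K * (L + 1)) + L * P * (2 * q) by rewrite /P; ring.
  exact: leq_add e1 e2.
have hg : 2 * K * (h + 1) + 1 <= g.
  have h1 : 1 <= h by exact: leq_trans (leq_addl _ _) hh.
  have : K * 1 <= K * h by rewrite leq_mul2l h1 orbT.
  move: hLh; rewrite /M /g; lia.
set m := (2 * K + 1) * n %/ P.
have Pp : 0 < P by rewrite /P !muln_gt0 Kp dp addn1.
have hm1 : m * P <= (2 * K + 1) * n by exact: leq_trunc_div.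
have hm2 : (2 * K + 1) * n < m.+1 * P by exact: ltn_ceil.
have hgn := leq_mul hg (leqnn n).
have Y : (2 * K + 1) * n - P * (1 + q) <= P * m - P * q.
  move: hm2; rewrite mulSn; lia.
have E : K * (L + 1) * (2 * n + 1) = 2 * K * (h + 1) * n + K * (L + 1) + 2 * K * g * n.
  rewrite hLgh; ring.
have key3 : K * (L + 1) * (2 * n + 1) <= g * (P * m - P * q).
  apply: (leq_trans _ (leq_mul (leqnn g) Y)).
  rewrite mulnBr E.
  have F : g * ((2 * K + 1) * n) = 2 * K * g * n + g * n by ring.
  rewrite F.
  move: hgn key2; rewrite mulnDl mul1n; lia.
have key4 : 2 * n + 1 <= g * (m - q) * d.
  have KL : 0 < K * (L + 1) by rewrite muln_gt0 Kp addn1.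
  rewrite -(leq_pmul2l KL); apply: (leq_trans key3).
  rewrite -mulnBr; apply: eq_leq; rewrite /P; ring.
apply: (@leq_trans (2 ^ (2 * n + 1))).
  by rewrite expnD expnM ltn_Pmulr // expn_gt0.
apply: (@leq_trans (2 ^ (g * (m - q) * d))); first by rewrite leq_exp2l.
rewrite -mulnA expnM -/q expnM leq_exp2r //.
exact: fact_ge.
Qed.

From mathcomp Require Import all_boot.
From Stdlib Require Import Reals.

Theorem theorem3 (s t : nat) (hs : (0 < s)%N) (ht : (0 < t)%N) :
  forall eps : R, (0 < eps)%R ->
  exists n0 : nat, forall n : nat, (n0 <= n)%N ->
    exists N : nat,
      (INR N <= INR n + (2 + eps) * INR n / log2 (INR n))%R /\
      ramsey_prop (@SD_le s t) (@Q_le n) N.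
Proof.
move=> eps heps.
pose d := maxn s t.
have dpos : (0 < d)%N by apply: leq_trans hs (leq_maxl s t).
have [K [hK /ltP Kp]] := archimed_cor1 eps heps.
have [h0 [h0p hpoly]] := exp_poly (muln (muln K (4 * K + 2)) (1 + 2 * (4 * K + 2) * d)).
exists (expn 2 ((4 * K + 2) * (h0 + 1))) => n hn.
pose L := trunc_log 2 n.
pose m := divn ((2 * K + 1) * n) (K * d * (L + 1)).
exists (n + m * d); split.
- have n2 : (expn 2 1 <= n)%N.
    apply: leq_trans hn; rewrite leq_exp2l //; lia.
  have n0 : (0 < n)%N by apply: leq_trans n2.
  apply: (@real_bound n L m d K eps Kp) => //.
  + exact: trunc_log_max.
  + exact: trunc_logP.
  + rewrite addn1; exact: trunc_log_ltn.
  + rewrite mulnC; exact: leq_trunc_div.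
- apply: comb => //.
  + exact: leq_maxl.
  + exact: leq_maxr.
  + exact: (@nat_bound K d h0 n Kp dpos h0p hpoly hn).
Qed.
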